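(* Let $R$ be a finite group and let $T \leq R$ be a subgroup. Then \[ |\mathrm{Sub}(R,T)| \leq 7.3722 \cdot [R:T]^{\frac{\log_2 [R:T]}{4} + 1.8919}. \]
   Context: For a finite group $R$ and a subgroup $T\le R$, $\mathrm{Sub}(R,T)=\{H\le R : T\le H\}$ denotes the set of subgroups of $R$ containing $T$. *)

(* Defs.v *)
From Stdlib Require Import Reals.
From mathcomp Require Import all_boot all_fingroup.
Set Implicit Arguments. Unset Strict Implicit. Unset Printing Implicit Defensive.

Definition SubRT (gT : finGroupType) (R T : {group gT}) : {set {group gT}} :=
  [set H in subgroups R | T \subset H].

Definition log2 (x : Reals.Rdefinitions.R) : Reals.Rdefinitions.R := Rdiv (ln x) (ln (IZR 2%Z)).

(* Main.v *)
Require Import Defs.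
From Stdlib Require Import Reals.
From mathcomp Require Import all_boot all_fingroup.
From Stdlib Require Import Lra.
From mathcomp Require Import zify.
Set Implicit Arguments. Unset Strict Implicit. Unset Printing Implicit Defensive.

Section Grp.
Variable gT : finGroupType.
Implicit Types K H G T : {group gT}.

Fixpoint wt (i : nat) (K H : {group gT}) : nat :=
  (K == H) * #|H| ^ i +
  (if i is i'.+1 then \sum_(g in H :\: K) wt i' (K <*> <[g]>)%G H else 0).

Lemma sum_subset (A B : {set {group gT}}) (F : {group gT} -> nat) :
  A \subset B -> \sum_(H in A) F H <= \sum_(H in B) F H.
Proof.
move=> sAB; rewrite [X in _ <= X](big_setID A) /= (setIidPr sAB).
exact: leq_addr.
Qed.

Lemma wt_sum i G K : K \subset G ->
  \sum_(H in SubRT G K) wt i K H <= #|G| ^ i.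
Proof.
elim: i K => [|i IH] K sKG.
  rewrite /=.
  rewrite (eq_bigr (fun H => (K == H) : nat)); last by move=> H _; rewrite expn0 muln1 addn0.
  rewrite (bigD1 K) /=; last by rewrite /SubRT inE /subgroups inE sKG subxx.
  rewrite eqxx big1 // => H /andP[_ nHK]; by rewrite eq_sym (negbTE nHK).
rewrite /= big_split /=.
have A : \sum_(H in SubRT G K) (K == H) * #|H| ^ i.+1 <= #|K| ^ i.+1.
  rewrite (bigD1 K) /=; last by rewrite /SubRT inE /subgroups inE sKG subxx.
  rewrite eqxx mul1n big1 ?addn0 // => H /andP[_ nHK]; by rewrite eq_sym (negbTE nHK).
have B : \sum_(H in SubRT G K) \sum_(g in H :\: K) wt i (K <*> <[g]>)%G H
         <= #|G :\: K| * #|G| ^ i.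
  rewrite (eq_bigr (fun H => \sum_(g in G :\: K) (if g \in H then wt i (K <*> <[g]>)%G H else 0))); last first.
    move=> H; rewrite /SubRT inE /subgroups inE => /andP[sHG _].
    rewrite -big_mkcondr /=; apply: eq_bigl => g.
    rewrite !inE; case gH: (g \in H); last by rewrite !andbF.
    have gG := subsetP sHG g gH. by rewrite gG !andbT.


  rewrite exchange_big /= -sum_nat_const; apply: leq_sum => g; rewrite inE => /andP[ngK gG].
  rewrite -big_mkcondr /=.
  rewrite (eq_bigl (fun H => H \in SubRT G (K <*> <[g]>)%G)).
    apply: IH; by rewrite join_subG sKG cycle_subG gG.
  move=> H; rewrite /SubRT !inE /= join_subG cycle_subG.
  by case: (H \subset G); case: (K \subset H); case: (g \in H).
apply: leq_trans (leq_add A B) _.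
rewrite cardsD (setIidPr sKG).
have KG : #|K| <= #|G| by apply: subset_leq_card.
have : #|K| ^ i <= #|G| ^ i by case: (i) => [|i0] //; rewrite leq_exp2r.
rewrite !expnS => h.
have h2 : #|K| * #|K| ^ i <= #|K| * #|G| ^ i by rewrite leq_mul2l h orbT.
apply: leq_trans (leq_add h2 (leqnn _)) _.
rewrite -mulnDl subnKC //.
Qed.

Lemma double_proper K H : K \subset H -> K != H -> 2 * #|K| <= #|H|.
Proof.
move=> sKH nKH.
have pKH : K \proper H by rewrite properEneq sKH andbT.
have lt := proper_card pKH.
have /dvdnP[c hc] := cardSg sKH.
have K0 : 0 < #|K| by apply: cardG_gt0.
rewrite hc in lt *.
have : 1 < c by case: c hc lt => [|[|c]] //= _; rewrite ?mul0n ?mul1n ?ltnn.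
move=> c1; rewrite leq_mul2r c1 orbT //.
Qed.

Lemma wt_low i K H : K \subset H -> #|H| < 2 ^ i.+1 * #|K| ->
  #|H| ^ i <= 2 ^ i * wt i K H.
Proof.
elim: i K => [|i IH] K sKH lt.
  rewrite /= expn0 mul1n muln1 addn0.
  case: eqP => // nKH; exfalso.
  have := double_proper sKH (introN eqP nKH). rewrite expn1 in lt.
  by rewrite leqNgt lt.
rewrite /=.
case: (eqVneq K H) => [<-|nKH]; first by rewrite mul1n (leq_trans (leq_addr (\sum_(g in K :\: K) wt i (K <*> <[g]>)%G K) _)) // leq_pmull // expn_gt0.
rewrite mul0n add0n.
have h2 := double_proper sKH nKH.
have step : forall g, g \in H :\: K -> #|H| ^ i <= 2 ^ i * wt i (K <*> <[g]>)%G H.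
  move=> g; rewrite inE => /andP[ngK gH].
  have sKgH : (K <*> <[g]>)%G \subset H by rewrite join_subG sKH cycle_subG gH.
  have nKKg : K != (K <*> <[g]>)%G.
    apply/eqP => e; move: ngK; rewrite e /=.
    by rewrite (subsetP (joing_subr _ _)) // cycle_id.
  have h3 := @double_proper K (K <*> <[g]>)%G (joing_subl _ _) nKKg.
  apply: IH => //.
  apply: (leq_trans lt); rewrite !expnS -!mulnA leq_mul2l /=.
  by rewrite mulnCA leq_mul2l h3 orbT.
rewrite [2 ^ _]expnS -mulnA big_distrr /=.
apply: (@leq_trans (2 * \sum_(g in H :\: K) #|H| ^ i)); last by rewrite leq_mul2l; apply/orP; right; apply: leq_sum => g gHK; exact: step.
rewrite sum_nat_const cardsD (setIidPr sKH) mulnA expnS.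
rewrite leq_mul2r; apply/orP; right.
move: h2; set a := #|H|; set b := #|K|; lia.
Qed.


Definition Sk (G T : {group gT}) (k : nat) : {set {group gT}} :=
  [set H in SubRT G T | (2 ^ k * #|T| <= #|H|) && (#|H| < 2 ^ k.+1 * #|T|)].

Lemma expn_mono m n e : m <= n -> m ^ e <= n ^ e.
Proof. by case: e => [|e] // h; rewrite leq_exp2r. Qed.

Lemma Sk_bound G T k : T \subset G -> #|Sk G T k| * 2 ^ (k * k) <= 2 ^ k * #|G : T|%g ^ k.
Proof.
move=> sTG.
have main : #|Sk G T k| * (2 ^ k * #|T|) ^ k <= 2 ^ k * #|G| ^ k.
  rewrite -sum_nat_const.
  apply: (@leq_trans (\sum_(H in Sk G T k) #|H| ^ k)).
    apply: leq_sum => H; rewrite inE => /andP[_ /andP[h _]]; exact: expn_mono.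
  apply: (@leq_trans (\sum_(H in Sk G T k) 2 ^ k * wt k T H)).
    apply: leq_sum => H; rewrite !inE => /andP[/andP[_ sTH] /andP[_ h]].
    exact: wt_low.
  rewrite -big_distrr leq_mul2l; apply/orP; right.
  apply: leq_trans (wt_sum k sTG).
  apply: sum_subset; apply/subsetP => H; rewrite inE => /andP[] //.
rewrite -(Lagrange sTG) !expnMn -expnM mulnA in main.
rewrite mulnCA [X in X <= _]mulnC leq_pmul2l ?expn_gt0 ?cardG_gt0 // in main.
Qed.

Lemma cover_bound G T : T \subset G ->
  #|SubRT G T| <= \sum_(k < #|G : T|%g) #|Sk G T k|.
Proof.
move=> sTG.
rewrite -sum1_card.
apply: (@leq_trans (\sum_(H in SubRT G T) \sum_(k < #|G : T|%g) (H \in Sk G T k))).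
  apply: leq_sum => H HS.
  have := HS; rewrite inE /subgroups inE => /andP[sHG sTH].
  set m := #|H : T|%g.
  have hm : #|H| = #|T| * m by rewrite (Lagrange sTH).
  have m0 : 0 < m by apply: indexg_gt0.
  have mn : m <= #|G : T|%g.
    have : #|H| <= #|G| by apply: subset_leq_card.
    by rewrite hm -(Lagrange sTG) leq_pmul2l ?cardG_gt0.
  set k := trunc_log 2 m.
  have k1 := trunc_logP (isT : 1 < 2) m0.
  have k2 := trunc_log_ltn m (isT : 1 < 2).
  have kn : k < #|G : T|%g.
    apply: leq_trans mn; apply: leq_trans k1; exact: ltn_expl.
  rewrite (bigD1 (Ordinal kn)) //= inE HS /= hm. apply: leq_trans (leq_addr _ _).
  rewrite lt0b; apply/andP; split.
    by rewrite [2 ^ k * _]mulnC leq_pmul2l ?cardG_gt0.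
  by rewrite [2 ^ k.+1 * _]mulnC ltn_pmul2l ?cardG_gt0.
rewrite exchange_big /=; apply: leq_sum => k _.
rewrite -sum1_card big_mkcond [X in _ <= X]big_mkcond /=.
apply: leq_sum => H.
case: (H \in SubRT G T); case: (H \in Sk G T k) => //.
Qed.

End Grp.
Unset Implicit Arguments.
Open Scope R_scope.
Lemma exp_le x y : x <= y -> exp x <= exp y.
Proof. intros [h|h]; [left; now apply exp_increasing | right; now subst]. Qed.

Lemma ln_nonneg x : 1 <= x -> 0 <= ln x.
Proof. intros [h|h]; [left; rewrite <- ln_1; apply ln_increasing; lra | subst; rewrite ln_1; lra]. Qed.

Lemma ln2_pos : 0 < ln 2.
Proof. pose proof ln_lt_2; lra. Qed.

Lemma pow_exp x m : 0 < x -> x ^ m = exp (INR m * ln x).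
Proof. intros hx. now rewrite <- Rpower_pow. Qed.

Lemma INR_muln m n : INR (m * n)%N = INR m * INR n.
Proof. exact: mult_INR. Qed.

Lemma INR_expn m n : INR (m ^ n)%N = INR m ^ n.
Proof. elim: n => [|n IH]; first by rewrite expn0 /=. by rewrite expnS INR_muln IH /=. Qed.

Lemma INR_addn m n : INR (m + n)%N = INR m + INR n.
Proof. exact: plus_INR. Qed.

Definition Bd (n : nat) : R :=
  exp (ln 2 * ((ln (INR n) / ln 2 + 1) * (ln (INR n) / ln 2 + 1) / 4)).

Lemma realk (a k n : nat) : (0 < n)%N -> (a * 2 ^ (k * k) <= 2 ^ k * n ^ k)%N ->
  INR a <= Bd n.
Proof.
move=> n0 h.
have hn : 0 < INR n by apply: lt_0_INR; apply/ltP.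
move/leP: h => h; apply le_INR in h; rewrite !INR_muln !INR_expn in h.
have e2 : INR 2 = 2 by rewrite /= ; lra.
rewrite e2 in h.
rewrite (pow_exp _ (k*k)%N) ?(pow_exp _ k) // in h; try lra.
rewrite -exp_plus in h.
set L := ln (INR n) / ln 2 in h *.
have lnL : ln (INR n) = L * ln 2 by rewrite /L; field; apply: Rgt_not_eq; apply ln2_pos.
rewrite lnL INR_muln in h.
have l2 := ln2_pos.
have key : INR k * ln 2 + INR k * (L * ln 2) <=
           ln 2 * ((L + 1) * (L + 1) / 4) + INR k * INR k * ln 2.
  have sq : 0 <= ln 2 * ((INR k - (L+1)/2) * (INR k - (L+1)/2)).
    apply: Rmult_le_pos; [lra | apply: Rle_0_sqr].
  nra.
apply: (Rmult_le_reg_r (exp (INR k * INR k * ln 2))); first exact: exp_pos.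
apply: (Rle_trans _ _ _ h).
rewrite /Bd -/L -exp_plus; exact: exp_le.
Qed.

Lemma sum_real (a : nat -> nat) (B : R) n :
  (forall k, (k < n)%N -> INR (a k) <= B) ->
  INR (\sum_(k < n) a k) <= INR n * B.
Proof.
elim: n => [|n IH] h.
  rewrite big_ord0 /=; lra.
rewrite big_ord_recr INR_addn S_INR /=.
have h1 := IH (fun k hk => h k (ltn_trans hk (ltnSn n))).
have h2 := h n (ltnSn n).
rewrite Rmult_plus_distr_r Rmult_1_l; apply: Rplus_le_compat; [exact: h1 | exact: h2].
Qed.

Lemma final_real (n : nat) : (0 < n)%N ->
  INR n * Bd n <= (73722 / 10000) * Rpower (INR n) (ln (INR n) / ln 2 / 4 + 18919 / 10000).
Proof.
move=> n0.
have hn : 0 < INR n by apply: lt_0_INR; apply/ltP.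
have hn1 : 1 <= INR n by change 1 with (INR 1); apply: le_INR; apply/leP.
have l2 := ln2_pos.
rewrite /Bd /Rpower.
set L := ln (INR n) / ln 2.
have lnL : ln (INR n) = L * ln 2 by rewrite /L; field; apply: Rgt_not_eq; apply ln2_pos.
have L0 : 0 <= L by rewrite /L; apply: Rmult_le_pos; [apply: ln_nonneg; lra | left; apply: Rinv_0_lt_compat; lra].
rewrite -{1}(exp_ln (INR n)) // -exp_plus lnL.
apply: (Rle_trans _ (exp ((L / 4 + 18919 / 10000) * (L * ln 2) + ln 2))).
  apply: exp_le; nra.
rewrite exp_plus exp_ln; last lra.
have := exp_pos ((L / 4 + 18919 / 10000) * (L * ln 2)); lra.
Qed.

Close Scope R_scope.

Theorem theorem1p1 (gT : finGroupType) (G T : {group gT}) (hTG : T \subset G) :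
  Rle (INR #|SubRT G T|)
      (Rmult (Rdiv (IZR 73722%Z) (IZR 10000%Z))
         (Rpower (INR (#|G : T|%g))
            (Rplus (Rdiv (log2 (INR (#|G : T|%g))) (IZR 4%Z))
                   (Rdiv (IZR 18919%Z) (IZR 10000%Z))))).
Proof.
have n0 : (0 < #|G : T|%g)%N by apply: indexg_gt0.
have c := cover_bound hTG.
apply: Rle_trans (le_INR _ _ (elimT leP c)) _.
apply: Rle_trans (sum_real (fun k => #|Sk G T k|) (Bd #|G : T|%g) #|G : T|%g _) _.
  move=> k _; exact: realk n0 (Sk_bound k hTG).
rewrite /log2; exact: final_real n0.
Qed.
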